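(* Suppose that $k<n$ are positive reals and $t\le a$ are positive integers such that $a,t=\alpha_0(n)+O(1)$ and $2\le n/k=t-\Theta(1)$. Then, with $\rho=n/k$, \[ \hat L_0(n,k,t)=\Big(a-\rho-1-\frac{2}{\log2}\Big)(\log n-\log\log n)+\log\mu_a(n)+O(1). \]
   Context: $\alpha_0(n)=2\log_2 n-2\log_2\log_2 n+2\log_2(e/2)+1$, $\mu_a(n)=\binom na2^{-\binom a2}$, $d_i=2^{\binom i2}i!$. For positive integer $t$ and reals $\rho\in(1,t)$, $k>0$: $\tilde L_0(\rho,k,t)=\sup\{\rho\log(\rho k)-\log k-\rho+1-\sum_{i=1}^tp_i\log(p_id_i)\}$, the supremum over $(p_i)_{i=1}^t\in[0,1]^t$ with $\sum_ip_i=1$, $\sum_iip_i=\rho$ (with $0\log0=0$); and $\hat L_0(n,k,t)=\tilde L_0(n/k,k,t)$. Logarithms are natural; asymptotics are as $n\to\infty$ with the implicit constants in the hypotheses fixed. *)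

(* Defs.v *)
From HB Require Import structures.
From mathcomp Require Import all_boot all_order all_algebra.
From mathcomp Require Import all_classical all_reals all_analysis.
Set Implicit Arguments. Unset Strict Implicit. Unset Printing Implicit Defensive.
Import Order.TTheory GRing.Theory Num.Theory.
Local Open Scope ring_scope.
Local Open Scope classical_set_scope.

Section Defs.
Variable R : realType.

Definition log2 (x : R) : R := ln x / ln 2.

Definition alpha0 (n : R) : R :=
  2 * log2 n - 2 * log2 (log2 n) + 2 * log2 (expR 1 / 2) + 1.

Definition binomR (n : R) (a : nat) : R :=
  (\prod_(0 <= i < a) (n - i%:R)) / (a`!)%:R.

Definition mu (a : nat) (n : R) : R := binomR n a / (2 ^+ 'C(a, 2)).

Definition dcoef (i : nat) : R := (2 ^ 'C(i, 2) * i`!)%:R.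

Definition plogpd (p : R) (i : nat) : R :=
  if p == 0 then 0 else p * ln (p * dcoef i).

Definition Lobj (rho k : R) (t : nat) (p : nat -> R) : R :=
  rho * ln (rho * k) - ln k - rho + 1 - \sum_(1 <= i < t.+1) plogpd (p i) i.

Definition feasible (rho : R) (t : nat) (p : nat -> R) : Prop :=
  (forall i, (1 <= i <= t)%N -> 0 <= p i <= 1) /\
  \sum_(1 <= i < t.+1) p i = 1 /\
  \sum_(1 <= i < t.+1) i%:R * p i = rho.

Definition Ltilde0 (rho k : R) (t : nat) : R :=
  sup [set v | exists p : nat -> R, feasible rho t p /\ v = Lobj rho k t p].

Definition Lhat0 (n k : R) (t : nat) : R := Ltilde0 (n / k) k t.

End Defs.

(* Main.v *)
Require Import Defs.
From mathcomp Require Import all_boot all_order all_algebra.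
From mathcomp Require Import all_classical all_reals all_analysis.
From mathcomp Require Import lra ring zify.
Import Order.TTheory GRing.Theory Num.Theory.
Local Open Scope ring_scope.

Definition Dn (i : nat) : nat := (2 ^ 'C(i, 2) * i`!)%N.

Lemma DnS i : Dn i.+1 = (Dn i * (2 ^ i * i.+1))%N.
Proof.
rewrite /Dn binS bin1 expnD factS.
set x := (2 ^ _)%N; set y := (2 ^ _)%N; set z := i`!. lia.
Qed.

Lemma Dn_gt0 i : (0 < Dn i)%N.
Proof. by rewrite /Dn muln_gt0 expn_gt0 fact_gt0. Qed.

Lemma Dn_lo i b l : (i <= b)%N ->
  (forall j, (i <= j < b)%N -> l <= 2 ^ j * j.+1)%N ->
  (Dn i * l ^ (b - i) <= Dn b)%N.
Proof.
elim: b => [|b IH] hib hl.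
  by move: hib; rewrite leqn0 => /eqP ->; rewrite subnn expn0 muln1.
case: (ltngtP i b.+1) hib => // [hlt|->] _; last by rewrite subnn expn0 muln1.
have hib : (i <= b)%N by [].
rewrite subSn // expnS DnS mulnCA mulnC.
apply: leq_mul.
  apply: IH => // j /andP[h1 h2]; apply: hl; rewrite h1 /=; exact: ltnW.
by apply: hl; rewrite hib leqnn.
Qed.

Lemma Dn_hi i b c h : (i <= b)%N ->
  (forall j, (i <= j < b)%N -> c * (2 ^ j * j.+1) <= h)%N ->
  (Dn b * c ^ (b - i) <= Dn i * h ^ (b - i))%N.
Proof.
elim: b => [|b IH] hib hl.
  by move: hib; rewrite leqn0 => /eqP ->; rewrite subnn !expn0 !muln1.
case: (ltngtP i b.+1) hib => // [hlt|->] _; last by rewrite subnn !expn0 !muln1.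
have hib : (i <= b)%N by [].
rewrite subSn // !expnS DnS.
have IH' : (Dn b * c ^ (b - i) <= Dn i * h ^ (b - i))%N.
  apply: IH => // j /andP[h1 h2]; apply: hl; rewrite h1 /=; exact: ltnW.
have hb : (c * (2 ^ b * b.+1) <= h)%N by apply: hl; rewrite hib leqnn.
have := leq_mul IH' hb.
set x1 := Dn b; set x2 := (c ^ _)%N; set x3 := Dn i; set x4 := (h ^ _)%N; set x5 := (2 ^ b)%N.
lia.
Qed.

Lemma geo_up (R : realType) k a :
  \sum_(a <= i < a + k) (2^-1 : R) ^+ (i - a) = 2 - 2 * (2^-1) ^+ k.
Proof.
elim: k => [|k IH]; first by rewrite addn0 big_geq // expr0; lra.
rewrite addnS big_nat_recr ?leq_addr //= IH addKn exprS; lra.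
Qed.

Lemma geo_down (R : realType) k a :
  \sum_(a <= i < a + k) (2^-1 : R) ^+ (a + k - 1 - i) = 2 - 2 * (2^-1) ^+ k.
Proof.
elim: k a => [|k IH] a; first by rewrite addn0 big_geq // expr0; lra.
rewrite big_ltn; last by rewrite addnS ltnS leq_addr.
rewrite -addSnnS IH.
have -> : (a.+1 + k - 1 - a = k)%N by lia.
rewrite exprS; lra.
Qed.

Lemma dcoef_gt0 (R : realType) i : 0 < dcoef R i.
Proof. by rewrite /dcoef ltr0n; exact: Dn_gt0. Qed.

Lemma ln_le_sub1 (R : realType) (y : R) : 0 < y -> ln y <= y - 1.
Proof. move=> hy; have := @le_ln1Dx R (y - 1); have -> : 1 + (y - 1) = y by ring. apply; lra. Qed.

Lemma gibbs (R : realType) (rho lam : R) t (p : nat -> R) :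
  (0 < t)%N -> feasible rho t p ->
  - \sum_(1 <= i < t.+1) plogpd (p i) i <=
  ln (\sum_(1 <= i < t.+1) (expR (lam * (i%:R - rho)) / dcoef R i)).
Proof.
move=> t0 [hp [hs1 hsi]].
set w := fun i : nat => expR (lam * (i%:R - rho)) / dcoef R i.
set Z := \sum_(1 <= i < t.+1) w i.
have wpos i : 0 < w i by rewrite /w divr_gt0 ?expR_gt0 ?dcoef_gt0.
have Zpos : 0 < Z.
  rewrite /Z big_ltn ?ltnS //; apply: ltr_pwDl; first exact: wpos.
  by apply: sumr_ge0 => i _; apply: ltW.
have step : forall i, (1 <= i < t.+1)%N ->
   - plogpd (p i) i <= w i * Z^-1 - p i + ln Z * p i - lam * (i%:R * p i) + lam * rho * p i.
  move=> i hi; have /andP[p0 p1] := hp i hi.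
  rewrite /plogpd; case: eqP => [->|/eqP pn0].
    have := divr_gt0 (wpos i) Zpos; lra.
  have pp : 0 < p i by rewrite lt_def pn0 p0.
  have dp := dcoef_gt0 R i.
  have hy : 0 < w i / (Z * p i) by apply: divr_gt0 => //; apply: mulr_gt0.
  have H := @ln_le_sub1 R _ hy.
  have zp : 0 < Z * p i by apply: mulr_gt0.
  have l1 : ln (w i / (Z * p i)) = ln (w i) - ln Z - ln (p i).
    by rewrite ln_div ?posrE ?wpos // lnM ?posrE //; ring.
  have l2 : ln (w i) = lam * (i%:R - rho) - ln (dcoef R i).
    by rewrite /w ln_div ?posrE ?expR_gt0 // expRK.
  rewrite l1 l2 in H.
  rewrite lnM ?posrE //.
  have H2 := ler_wpM2l (ltW pp) H.
  have e : p i * (w i / (Z * p i) - 1) = w i * Z^-1 - p i.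
    by field; apply/andP; split; apply/lt0r_neq0.
  rewrite e in H2; move: H2.
  set lp := ln (p i); set ld := ln (dcoef R i); set lz := ln Z; set ii := (i%:R : R).
  move=> H2; nra.
have := ler_sum_nat step.
rewrite !big_split /= -!mulr_suml -!mulr_sumr -/Z hs1 !sumrN -mulr_sumr hs1 hsi.
rewrite divff ?lt0r_neq0 //.
move=> H; lra.
Qed.

Lemma sum2pt (R : realType) (f : nat -> R) m t : (1 <= m)%N -> (m < t)%N ->
  (forall i, i != m -> i != m.+1 -> f i = 0) ->
  \sum_(1 <= i < t.+1) f i = f m + f m.+1.
Proof.
move=> h1 h2 hf.
rewrite (@big_cat_nat _ _ _ m) //=; last by apply: leq_trans (ltnW h2) _.
rewrite big_nat_cond big1 ?add0r; last first.
  move=> i /andP[/andP[_ hi] _]; apply: hf.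
    by rewrite ltn_neqAle in hi; case/andP: hi.
  by apply/eqP => e; move: hi; rewrite e ltnNge leqnSn.
rewrite big_ltn ?ltnS 1?ltnW // big_ltn ?ltnS //.
rewrite big_nat_cond big1 ?addr0 //.
move=> i /andP[/andP[hi _] _]; apply: hf.
  by apply/eqP => e; move: hi; rewrite e ltnNge ltnW.
by apply/eqP => e; move: hi; rewrite e ltnn.
Qed.

Lemma plogpd_le (R : realType) (p : R) i : 0 <= p <= 1 -> plogpd p i <= p * ln (dcoef R i).
Proof.
move=> /andP[p0 p1]; rewrite /plogpd; case: eqP => [->|/eqP pn0]; first by rewrite mul0r.
have pp : 0 < p by rewrite lt_def pn0 p0.
rewrite lnM ?posrE ?dcoef_gt0 // mulrDr gerDr.
by rewrite pmulr_rle0 // ln_le0.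
Qed.

Lemma ln_dcoefS (R : realType) m :
  ln (dcoef R m.+1) = ln (dcoef R m) + ln ((2 ^ m * m.+1)%:R).
Proof.
have -> : dcoef R m.+1 = dcoef R m * (2 ^ m * m.+1)%:R by rewrite /dcoef -natrM -DnS.
by rewrite lnM // posrE ?dcoef_gt0 // ltr0n muln_gt0 expn_gt0.
Qed.

Ltac nz := rewrite ?expf_neq0 ?mulf_neq0 ?pnatr_eq0 -?lt0n ?fact_gt0 ?expn_gt0 ?lt0r_neq0 //.

Lemma frac_le (R : realType) (E x y : R) : 0 < E -> 0 < x -> x <= y -> E / y <= E / x.
Proof.
move=> E0 x0 xy; have y0 : 0 < y by apply: lt_le_trans xy.
rewrite ler_pM2l // lef_pV2 ?posrE //.
Qed.

Lemma geo_down' (R : realType) m :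
  \sum_(1 <= i < m.+1) (2^-1 : R) ^+ (m - i) <= 2.
Proof.
have := geo_down R m 1; rewrite add1n.
have e : forall i, (m.+1 - 1 - i = m - i)%N by move=> i; lia.
under eq_bigr do rewrite e.
move=> ->; have : 0 <= (2^-1 : R) ^+ m by apply: exprn_ge0; lra.
lra.
Qed.

Lemma geo_up' (R : realType) m t : (m < t)%N ->
  \sum_(m.+1 <= i < t.+1) (2^-1 : R) ^+ (i - m.+1) <= 2.
Proof.
move=> mt; have := geo_up R (t - m) m.+1.
have -> : (m.+1 + (t - m) = t.+1)%N by lia.
move=> ->; have : 0 <= (2^-1 : R) ^+ (t - m) by apply: exprn_ge0; lra.
lra.
Qed.

Lemma partA (R : realType) (rho k : R) (t : nat) : 2 <= rho -> rho < t%:R ->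
  let m := Num.truncn rho in
  let q : R := (2 ^ m * m.+1)%:R in
  let P := rho * ln (rho * k) - ln k - rho + 1 in
  let G := - ln (dcoef R m) - (rho - m%:R) * ln q in
  (P + G <= Ltilde0 rho k t <= P + G + ln 4 : Prop).
Proof.
move=> h2 ht m q P G.
have /andP[hm1 hm2] : m%:R <= rho < m.+1%:R by apply: truncn_itv; lra.
have m1 : (1 <= m)%N by rewrite /m trunc_gt0; lra.
have mt : (m < t)%N by rewrite -(ltr_nat R); lra.
have t0 : (0 < t)%N by apply: leq_trans mt.
have qn : (0 < 2 ^ m * m.+1)%N by rewrite muln_gt0 expn_gt0.
have qpos : 0 < q by rewrite ltr0n.
set lam := ln q.
set E := expR (lam * (m%:R - rho)).
have E0 : 0 < E by apply: expR_gt0.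
set A := E / dcoef R m.
have dm0 := dcoef_gt0 R m.
have A0 : 0 < A by apply: divr_gt0.
have expq : forall j : nat, expR (lam * j%:R) = q ^+ j.
  by move=> j; rewrite expRM_natr /lam lnK // posrE.
have hZ : \sum_(1 <= i < t.+1) expR (lam * (i%:R - rho)) / dcoef R i <= 4 * A.
  rewrite (@big_cat_nat _ _ _ m.+1) //=; last by rewrite ltnW.
  have h1 : \sum_(1 <= i < m.+1) expR (lam * (i%:R - rho)) / dcoef R i
            <= \sum_(1 <= i < m.+1) A * (2^-1) ^+ (m - i).
    apply: ler_sum_nat => i /andP[i1 im].
    rewrite ltnS in im.
    set j := (m - i)%N.
    have e1 : expR (lam * (i%:R - rho)) = E / q ^+ j.
      have -> : lam * (i%:R - rho) = lam * (m%:R - rho) - lam * j%:R.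
        by rewrite /j natrB //; ring.
      by rewrite expRD expRN expq.
    have nat1 : (Dn m * 2 ^ j <= Dn i * (2 ^ m * m.+1) ^ j)%N.
      apply: Dn_hi => // l /andP[l1 l2].
      rewrite mulnA -expnS; apply: leq_mul; first exact: leq_pexp2l.
      by rewrite ltnS ltnW.
    have r1 : dcoef R m * 2 ^+ j <= dcoef R i * q ^+ j.
      by rewrite /dcoef /q -!natrX -!natrM ler_nat.
    have pj : 0 < (2 : R) ^+ j by apply: exprn_gt0.
    have qj : 0 < q ^+ j by apply: exprn_gt0.
    have di := dcoef_gt0 R i.
    have eL : E / q ^+ j / dcoef R i = E / (dcoef R i * q ^+ j).
      by field; nz.
    have eR : A * (2^-1) ^+ j = E / (dcoef R m * 2 ^+ j).
      by rewrite /A exprVn; field; nz.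
    rewrite e1 eL eR; apply: frac_le => //; exact: mulr_gt0.
  have h2' : \sum_(m.+1 <= i < t.+1) expR (lam * (i%:R - rho)) / dcoef R i
            <= \sum_(m.+1 <= i < t.+1) A * (2^-1) ^+ (i - m.+1).
    apply: ler_sum_nat => i /andP[i1 im].
    set j := (i - m.+1)%N.
    have e1 : expR (lam * (i%:R - rho)) = E * q ^+ j.+1.
      have -> : lam * (i%:R - rho) = lam * (m%:R - rho) + lam * j.+1%:R.
        have -> : j.+1 = (i - m)%N by rewrite /j; lia.
        by rewrite natrB 1?ltnW //; ring.
      by rewrite expRD expq.
    have nat1 : (Dn m.+1 * (2 * (2 ^ m * m.+1)) ^ j <= Dn i)%N.
      apply: Dn_lo => // l /andP[l1 l2].
      rewrite mulnA -expnS; apply: leq_mul; first exact: leq_pexp2l.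
      by rewrite ltnS ltnW.
    rewrite DnS in nat1.
    have r1 : dcoef R m * q * (2 * q) ^+ j <= dcoef R i.
      rewrite /dcoef /q; have -> : (2 : R) * (2 ^ m * m.+1)%:R = (2 * (2 ^ m * m.+1))%:R by rewrite [RHS]natrM.
      by rewrite -!natrX -!natrM ler_nat.
    have pj : 0 < (2 : R) ^+ j by apply: exprn_gt0.
    have qj : 0 < q ^+ j by apply: exprn_gt0.
    have di := dcoef_gt0 R i.
    have pos1 : 0 < dcoef R m * q * (2 * q) ^+ j.
      by apply: mulr_gt0; [apply: mulr_gt0|apply: exprn_gt0; apply: mulr_gt0].
    have eR : A * (2^-1) ^+ j = (E * q ^+ j.+1) / (dcoef R m * q * (2 * q) ^+ j).
      by rewrite /A exprVn exprMn exprS; field; nz.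
    rewrite e1 eR; apply: frac_le => //; by rewrite mulr_gt0 ?exprn_gt0.
  have g1 := geo_down' R m; have g2 := @geo_up' R m t mt.
  rewrite -!mulr_sumr in h1 h2'.
  have := ler_wpM2l (ltW A0) g1; have := ler_wpM2l (ltW A0) g2.
  lra.
have Zpos : 0 < \sum_(1 <= i < t.+1) expR (lam * (i%:R - rho)) / dcoef R i.
  rewrite big_ltn ?ltnS //; apply: ltr_pwDl; first by rewrite divr_gt0 ?expR_gt0 ?dcoef_gt0.
  by apply: sumr_ge0 => i _; rewrite ltW // divr_gt0 ?expR_gt0 ?dcoef_gt0.
have lnA : ln (4 * A) = ln 4 + lam * (m%:R - rho) - ln (dcoef R m).
  rewrite lnM ?posrE // /A ln_div ?posrE // expRK; ring.
have ub : ubound [set v | exists p : nat -> R, feasible rho t p /\ v = Lobj rho k t p]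
            (P + G + ln 4).
  move=> v [p [fp ->]].
  have g := @gibbs R rho lam t p t0 fp.
  have := g; rewrite -/lam.
  have hl : ln (\sum_(1 <= i < t.+1) expR (lam * (i%:R - rho)) / dcoef R i) <= ln (4 * A).
    by rewrite ler_ln ?posrE // mulr_gt0.
  rewrite /Lobj /P /G -/lam; move: hl; rewrite lnA; lra.
pose p0 := fun i : nat => if i == m then 1 - (rho - m%:R) else if i == m.+1 then rho - m%:R else 0.
have z0 : forall i, i != m -> i != m.+1 -> p0 i = 0.
  by move=> i /negbTE h /negbTE h'; rewrite /p0 h h'.
have pm : p0 m = 1 - (rho - m%:R) by rewrite /p0 eqxx.
have pm1 : p0 m.+1 = rho - m%:R by rewrite /p0 (gtn_eqF (ltnSn m)) eqxx.
have hm2' : rho < m%:R + 1 by rewrite natr1.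
have fp0 : feasible rho t p0.
  split; [|split].
  - move=> i _; rewrite /p0; case: eqP => _; first by apply/andP; split; lra.
    case: eqP => _; apply/andP; split; lra.
  - by rewrite (@sum2pt R p0 m t m1 mt z0) pm pm1; ring.
  - rewrite (@sum2pt R (fun i => i%:R * p0 i) m t m1 mt); last first.
      by move=> i h h'; rewrite z0 // mulr0.
    by rewrite pm pm1 -natr1; ring.
have val : P + G <= Lobj rho k t p0.
  have hS : \sum_(1 <= i < t.+1) plogpd (p0 i) i <=
            \sum_(1 <= i < t.+1) p0 i * ln (dcoef R i).
    apply: ler_sum_nat => i hi; apply: plogpd_le; case: fp0 => hp _; exact: hp.
  rewrite (@sum2pt R (fun i => p0 i * ln (dcoef R i)) m t m1 mt) in hS; last first.
    by move=> i h h'; rewrite z0 // mul0r.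
  rewrite pm pm1 ln_dcoefS -/q -/lam in hS.
  rewrite /Lobj /P /G -/lam; lra.
set S := [set v | exists p : nat -> R, feasible rho t p /\ v = Lobj rho k t p]%classic.
have ne : (S !=set0)%classic by exists (Lobj rho k t p0); exists p0.
have hs : has_sup S by split => //; exists (P + G + ln 4).
rewrite /Ltilde0 -/S; apply/andP; split.
  apply: le_trans val _; have := sup_upper_bound hs; apply; by exists p0.
exact: ge_sup ne ub.
Qed.

Lemma ln_le_sub1' (R : realType) (y : R) : 0 < y -> ln y <= y - 1.
Proof. exact: ln_le_sub1. Qed.

Lemma ln2_bounds (R : realType) : 1/2 <= ln (2 : R) <= 5/6.
Proof.
apply/andP; split.
  have h := @le_ln1Dx R (-(1/2)); have e : 1 + - (1/2) = (2 : R)^-1 by field.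
  rewrite e lnV ?posrE // in h; try lra.
have e : (2 : R) <= expR (5/6).
  have -> : (5/6 : R) = 5/12 + 5/12 by field.
  rewrite expRD; have h := expR_ge1Dx (5/12 : R).
  have h0 : (0 : R) <= 1 + 5/12 by lra.
  have := ler_pM h0 h0 h h; lra.
by have := e; rewrite -ler_ln ?posrE ?expR_gt0 // expRK.
Qed.

Lemma ln_small (R : realType) (x : R) : 0 < x -> ln x <= x - 1.
Proof. exact: ln_le_sub1. Qed.

Lemma lnL_half (R : realType) (L : R) : 0 < L -> ln L <= L / 2.
Proof.
move=> L0.
have e1 : (2 : R) <= expR 1 by have := expR_ge1Dx (1 : R); lra.
have h := @ln_le_sub1 R (L / expR 1) (divr_gt0 L0 (expR_gt0 _)).
rewrite ln_div ?posrE ?expR_gt0 // expRK in h.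
have : L / expR 1 <= L / 2.
  by rewrite ler_pM2l // lef_pV2 ?posrE ?expR_gt0.
lra.
Qed.

Lemma expR_big (R : realType) (L : R) : 300 <= L -> 50 * L ^+ 2 <= expR L.
Proof.
move=> hL; have h := @expR_ge1Dxn R L 2 ltac:(lra).
have e : (3`!)%:R = (6 : R) by [].
rewrite e in h.
have : 50 * L ^+ 2 <= L ^+ 3 / 6.
  rewrite exprS; have : 0 <= L ^+ 2 by apply: sqr_ge0.
  nra.
lra.
Qed.

Lemma alpha0E (R : realType) (n : R) : 1 < n ->
  alpha0 n = 2 / ln 2 * (ln n - ln (ln n))
             + (2 / ln 2 * ln (ln 2) + 2 * (1 - ln 2) / ln 2 + 1).
Proof.
move=> n1; have L0 : 0 < ln n by apply: ln_gt0.
have l2 : 0 < ln (2 : R) by apply: ln_gt0; lra.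
rewrite /alpha0 /log2 ln_div ?posrE // ln_div ?posrE ?expR_gt0 // expRK.
field; apply: lt0r_neq0 => //.
Qed.

Lemma ln_prod_bounds (R : realType) (n : R) (a : nat) : a%:R < n ->
  0 < \prod_(0 <= i < a) (n - i%:R) /\
  a%:R * ln (n - a%:R) <= ln (\prod_(0 <= i < a) (n - i%:R)) <= a%:R * ln n.
Proof.
move=> an.
have hi : forall i, (0 <= i < a)%N -> n - a%:R <= n - i%:R /\ n - i%:R <= n.
  move=> i /andP[_ ia]; have : i%:R <= (a%:R : R) by rewrite ler_nat ltnW.
  have : 0 <= (i%:R : R) by [].
  split; lra.
have pp : 0 < \prod_(0 <= i < a) (n - i%:R).
  rewrite big_nat; apply: prodr_gt0 => i /hi [h1 _]; lra.
split => //.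
have lo : (n - a%:R) ^+ a <= \prod_(0 <= i < a) (n - i%:R).
  rewrite -(subn0 a) -prodr_const_nat subn0 [X in X <= _]big_nat [X in _ <= X]big_nat.
  apply: ler_prod => i /hi [h1 h2]; apply/andP; split; lra.
have up : \prod_(0 <= i < a) (n - i%:R) <= n ^+ a.
  rewrite -(subn0 a) -prodr_const_nat subn0 [X in X <= _]big_nat [X in _ <= X]big_nat.
  apply: ler_prod => i /hi [h1 h2]; apply/andP; split; lra.
have na : 0 < n - a%:R by lra.
have n0 : 0 < n by have : 0 <= (a%:R : R) by []; lra.
apply/andP; split.
  have h := lo; rewrite -ler_ln ?posrE ?exprn_gt0 // lnXn // in h.
  by rewrite mulr_natl.
have h := up; rewrite -ler_ln ?posrE ?exprn_gt0 // lnXn // in h.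
by rewrite mulr_natl.
Qed.

Lemma ln_mu (R : realType) (n : R) (a : nat) : a%:R < n ->
  ln (mu a n) = ln (\prod_(0 <= i < a) (n - i%:R)) - ln (dcoef R a).
Proof.
move=> an; have [pp _] := @ln_prod_bounds R n a an.
have -> : mu a n = (\prod_(0 <= i < a) (n - i%:R)) / dcoef R a.
  rewrite /mu /binomR /dcoef natrM natrX; field.
  by rewrite pnatr_eq0 -lt0n fact_gt0 /=.
by rewrite ln_div ?posrE ?dcoef_gt0.
Qed.

Lemma ln_q (R : realType) m :
  ln ((2 ^ m * m.+1)%:R : R) = m%:R * ln 2 + ln (m.+1%:R).
Proof.
by rewrite natrM natrX lnM ?posrE ?exprn_gt0 ?ltr0n // lnXn // mulr_natl.
Qed.

Lemma ln_Dn_pow (R : realType) m x j : (0 < x)%N ->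
  ln ((Dn m * x ^ j)%:R : R) = ln (dcoef R m) + j%:R * ln (x%:R).
Proof.
move=> x0; rewrite natrM lnM ?posrE ?ltr0n ?Dn_gt0 ?expn_gt0 ?x0 // natrX lnXn ?ltr0n //.
by rewrite mulr_natl.
Qed.

Lemma delta_bounds (R : realType) m a : (m <= a)%N -> (1 <= m)%N ->
  ln (dcoef R m) + (a - m)%:R * ln ((2 ^ m * m.+1)%:R) <= ln (dcoef R a) <=
  ln (dcoef R m) + (a - m)%:R * ln ((2 ^ a * a)%:R).
Proof.
move=> ma m1; have a1 : (1 <= a)%N by apply: leq_trans ma.
apply/andP; split.
  have h : (Dn m * (2 ^ m * m.+1) ^ (a - m) <= Dn a)%N.
    apply: Dn_lo => // j /andP[j1 j2]; apply: leq_mul; first exact: leq_pexp2l.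
    by [].
  rewrite -ln_Dn_pow ?muln_gt0 ?expn_gt0 //.
  have p1 : (0 < Dn m * (2 ^ m * m.+1) ^ (a - m))%N.
    by rewrite muln_gt0 Dn_gt0 expn_gt0 muln_gt0 expn_gt0.
  rewrite ler_ln ?posrE ?ltr0n ?p1 ?Dn_gt0 //.
  by rewrite /dcoef ler_nat.
have h : (Dn a * 1 ^ (a - m) <= Dn m * (2 ^ a * a) ^ (a - m))%N.
  apply: Dn_hi => // j /andP[j1 j2]; rewrite mul1n; apply: leq_mul.
    by apply: leq_pexp2l => //; apply: ltnW.
  by [].
rewrite exp1n muln1 in h.
rewrite -ln_Dn_pow ?muln_gt0 ?expn_gt0 //.
have p1 : (0 < Dn m * (2 ^ a * a) ^ (a - m))%N.
  by rewrite muln_gt0 Dn_gt0 expn_gt0 muln_gt0 expn_gt0 a1.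
rewrite ler_ln ?posrE ?ltr0n ?p1 ?Dn_gt0 //.
by rewrite /dcoef ler_nat.
Qed.

Lemma ln_ratio_le (R : realType) (x y c : R) : 0 < x -> 0 < y -> x <= c * y ->
  ln x - ln y <= c - 1.
Proof.
move=> x0 y0 h; rewrite -ln_div ?posrE //.
apply: le_trans (@ln_le_sub1 R _ (divr_gt0 x0 y0)) _.
have : x / y <= c by rewrite ler_pdivrMr.
lra.
Qed.

Lemma ln_mono (R : realType) (x y : R) : 0 < x -> x <= y -> ln x <= ln y.
Proof. move=> x0 h; rewrite ler_ln ?posrE //; exact: lt_le_trans h. Qed.


Lemma ln4_le3 (R : realType) : ln (4 : R) <= 3.
Proof. have := @ln_le_sub1 R 4 ltac:(lra); lra. Qed.

Theorem lemma39 (R : realType) (C1 c2 C2 : R) (hc2 : 0 < c2) :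
  exists N C : R, forall (n k : R) (a t : nat),
    N <= n -> 0 < k -> k < n -> (0 < t)%N -> (t <= a)%N ->
    `|a%:R - alpha0 n| <= C1 -> `|t%:R - alpha0 n| <= C1 ->
    2 <= n / k -> c2 <= t%:R - n / k <= C2 ->
    `| Lhat0 n k t
       - ((a%:R - n / k - 1 - 2 / ln 2) * (ln n - ln (ln n)) + ln (mu a n)) |
      <= C.
Proof.
have /andP[l2lo l2hi] := ln2_bounds R.
set l2 := ln (2 : R) in l2lo l2hi *.
have l2pos : 0 < l2 by lra.
set u := 2 / l2.
have ulo : 12/5 <= u by rewrite /u ler_pdivlMr //; lra.
have uhi : u <= 4 by rewrite /u ler_pdivrMr //; lra.
have lnl2 : -1 <= ln l2 <= 0.
  apply/andP; split; last by apply: ln_le0; lra.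
  have h := @ln_mono R (1/2) l2 ltac:(lra) l2lo.
  rewrite mul1r lnV ?posrE // -/l2 in h; lra.
set kap := u * ln l2 + 2 * (1 - l2) / l2 + 1.
have kapb : -7 <= kap <= 7.
  have e : 2 * (1 - l2) / l2 = u - 2 by rewrite /u; field; lra.
  rewrite /kap e; case/andP: lnl2 => h1 h2; apply/andP; split; nra.
set Kc := `|C1| + `|C2| + 7.
set S0 := 2 * `|C1| + `|C2|.
have nC1 := ler_norm C1; have nC2 := ler_norm C2.
have aC1 := normr_ge0 C1; have aC2 := normr_ge0 C2.
set L0 := 300 + 5 * Kc.
exists (expR L0), (3 + Kc + 4 + 1 + S0 * (Kc + 6) + (S0 + 1) * (S0 + 5) + 1).
move=> n k a t hN hk hkn ht0 hta ha htt hr2 /andP[hcl hcu].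
have n0 : 0 < n by apply: lt_le_trans hN; apply: expR_gt0.
set L := ln n.
have hL : L0 <= L by rewrite /L -(expRK L0) ler_ln ?posrE ?expR_gt0.
have n1 : 1 < n.
  apply: lt_le_trans hN; have := expR_ge1Dx L0; rewrite /L0 /Kc; lra.
have Kc7 : 7 <= Kc by rewrite /Kc; lra.
have hKc : Kc = `|C1| + `|C2| + 7 by [].
have hS0 : S0 = 2 * `|C1| + `|C2| by [].
have hL' : 300 + 5 * Kc <= L := hL.
have L1 : 1 <= L by lra.
rewrite alpha0E // -/l2 -/u -/kap -/L in ha htt.
set W := u * (L - ln L) in ha htt.
move: ha htt; rewrite !ler_norml => /andP[ha1 ha2] /andP[ht1 ht2].
have lL0 : 0 <= ln L by apply: ln_ge0.
have lL1 : ln L <= L / 2 by apply: lnL_half; lra.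
have y0 : 0 <= L - ln L by lra.
have hW1 : 6/5 * L <= W.
  have := ler_wpM2r y0 ulo; rewrite /W; lra.
have hW2 : W <= 4 * L.
  have := ler_wpM2r y0 uhi; rewrite /W; lra.
set rho := n / k in hr2 hcl hcu *.
have hta' : t%:R <= (a%:R : R) by rewrite ler_nat.
have hrho1 : L <= rho by lra.
have hrho2 : rho < t%:R by lra.
have ha5 : a%:R <= 5 * L by lra.
have hnL : 50 * L ^+ 2 <= n by rewrite -[n]lnK ?posrE // -/L; apply: expR_big; lra.
have an : a%:R < n.
  have : L <= L ^+ 2 by rewrite expr2; have := ler_wpM2r (ltW (lt_le_trans ltr01 L1)) L1; lra.
  lra.
have := @partA R rho k t hr2 hrho2; cbv zeta.
set m := Num.truncn rho.
set q := (2 ^ m * m.+1)%:R.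
move=> /andP[VA1 VA2].
have /andP[hm1 hm2] : m%:R <= rho < m.+1%:R by apply: truncn_itv; clear -hr2; lra.
rewrite -natr1 in hm2.
have m1 : (1 <= m)%N by rewrite /m truncn_gt0; clear -hr2; lra.
have ma : (m <= a)%N by rewrite -(ler_nat R); clear -hm1 hrho2 hta'; lra.
have lnq : ln q = m%:R * l2 + ln (m.+1%:R) by rewrite /q ln_q.
have hdelta := @delta_bounds R m a ma m1.
rewrite -/q natrB // in hdelta.
have a1 : (1 <= a)%N by apply: leq_trans ma.
have lnQ : ln ((2 ^ a * a)%:R : R) = a%:R * l2 + ln (a%:R).
  rewrite natrM natrX lnM ?posrE ?exprn_gt0 ?ltr0n // lnXn // mulr_natl //.
rewrite lnQ in hdelta.
have [pp /andP[hp1 hp2]] := @ln_prod_bounds R n a an.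
rewrite /Lhat0 -/rho ln_mu // -/L.
have hP : rho * ln (rho * k) - ln k - rho + 1 = (rho - 1) * L + ln rho - rho + 1.
  have e1 : rho * k = n by rewrite /rho divfK // lt0r_neq0.
  have e2 : ln rho = L - ln k by rewrite /rho ln_div ?posrE.
  rewrite e1 e2 -/L; ring.
rewrite hP in VA1 VA2.
have ln4 := ln4_le3 R.
rewrite -/L in hp1 hp2.
have Wdef : W = u * (L - ln L) by [].
clearbody W.
set lr := ln rho in VA1 VA2 *; set lL := ln L in lL0 lL1 y0 Wdef *.
set ldm := ln (dcoef R m) in VA1 VA2 hdelta *; set lda := ln (dcoef R a) in hdelta *.
set lpr := ln (\prod_(0 <= i < a) (n - i%:R)) in hp1 hp2 *.
set V := Ltilde0 rho k t in VA1 VA2 *.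
set lq := ln q in VA1 VA2 hdelta lnq *.
have hlr : 0 <= lr - lL <= 4.
  apply/andP; split.
    have := @ln_mono R L rho ltac:(clear -L1; lra) hrho1; rewrite -/lr -/lL.
    by clear; lra.
  have := @ln_ratio_le R rho L 5 ltac:(clear -hr2; lra) ltac:(clear -L1; lra) ltac:(clear -hrho1 hrho2 hta' ha5; lra).
  rewrite -/lr -/lL; clear; lra.
have hWr : `|W - rho| <= Kc.
  rewrite ler_norml; apply/andP; split; clear -ht1 ht2 hcl hcu kapb nC1 nC2 aC1 aC2 hKc hc2; lra.
set s := a%:R - rho.
have hs : 0 <= s <= S0.
  apply/andP; split; rewrite /s; clear -ha1 ha2 ht1 ht2 hcl hcu hta' nC1 nC2 aC1 aC2 hS0 hc2; lra.
set th := rho - m%:R in VA1 VA2 *.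
have hth : 0 <= th <= 1 by apply/andP; split; rewrite /th; clear -hm1 hm2; lra.
have hm3 : 0 <= ln (m.+1%:R) - lL <= 5.
  rewrite -natr1; apply/andP; split.
    have := @ln_mono R L (m%:R + 1) ltac:(clear -L1; lra) ltac:(clear -hm2 hrho1; lra).
    by rewrite -/lL; clear; lra.
  have := @ln_ratio_le R (m%:R + 1) L 6 ltac:(clear -hm2 hr2; lra) ltac:(clear -L1; lra)
     ltac:(clear -hm1 hrho2 hta' ha5 L1; lra).
  by rewrite -/lL; clear; lra.
set v := lq - 2 * L + lL.
have l21 : l2 <= 1 by clear -l2hi; lra.
have hv : `|v| <= Kc + 6.
  have eW : W * l2 = 2 * (L - lL) by rewrite Wdef /u; field; exact: lt0r_neq0.
  have ev : v = (rho - W) * l2 - th * l2 + (ln (m.+1%:R) - lL).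
    rewrite /v lnq /th; move: eW; clear; lra.
  have h1 : `|(rho - W) * l2| <= Kc.
    rewrite normrM (ger0_norm (ltW l2pos)); rewrite distrC in hWr.
    have := ler_wpM2l (normr_ge0 (rho - W)) l21; clear -hWr; lra.
  have h2 : 0 <= th * l2 <= 1.
    case/andP: hth => th0 th1; apply/andP; split; first by apply: mulr_ge0; clear -th0 l2pos; lra.
    have := ler_wpM2l th0 l21; clear -th1; lra.
  move: h1; rewrite ev !ler_norml => /andP[h1 h1']; apply/andP; split; clear -h1 h1' h2 hm3; lra.
have hsv : - (S0 * (Kc + 6)) <= s * v <= S0 * (Kc + 6).
  rewrite -ler_norml normrM; case/andP: hs => s0 s1.
  rewrite (ger0_norm s0); apply: ler_pM => //.
set am := a%:R - m%:R in hdelta *.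
have ham : 0 <= am <= S0 + 1.
  apply/andP; split; rewrite /am; clear -hm1 hm2 ha1 ha2 ht1 ht2 hcl hcu hta' nC1 nC2 aC1 aC2 hS0 hc2; lra.
set e1 := lda - ldm - am * lq.
have he1 : 0 <= e1 <= (S0 + 1) * (S0 + 5).
  case/andP: hdelta => d1 d2; apply/andP; split; first by rewrite /e1; clear -d1; lra.
  pose dd : R := ln (a%:R : R) - ln (m.+1%:R : R).
  have hdd : dd <= 4.
    rewrite /dd -natr1; have := @ln_ratio_le R a%:R (m%:R + 1) 5; clear -hm1 hm2 hrho1 hrho2 hta' ha5 L1 hr2 => h; have := h ltac:(lra) ltac:(lra) ltac:(lra); lra.
  case/andP: ham => am0 am1.
  have X1 : am * l2 <= am by have := ler_wpM2l am0 l21; clear; lra.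
  have eX : e1 <= am * (am * l2 + dd).
    have : am * (a%:R * l2 + ln a%:R) - am * lq = am * (am * l2 + dd).
      by rewrite /dd lnq /am; ring.
    rewrite /e1; clear -d2; lra.
  have X2 : am * (am * l2 + dd) <= am * (S0 + 5) by apply: ler_wpM2l => //; clear -X1 hdd am1; lra.
  have X3 : am * (S0 + 5) <= (S0 + 1) * (S0 + 5).
    apply: ler_wpM2r => //; clear -aC1 aC2 hS0; lra.
  clear -eX X2 X3; lra.
set e2 := a%:R * L - lpr.
have he2 : 0 <= e2 <= 1.
  apply/andP; split; first by rewrite /e2; clear -hp2; lra.
  have na : 0 < n - a%:R by clear -an; lra.
  have l1 : L - ln (n - a%:R) <= a%:R / (n - a%:R).
    have := @ln_ratio_le R n (n - a%:R) (n / (n - a%:R)) n0 na ltac:(rewrite divfK ?lt0r_neq0 //).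
    have -> : n / (n - a%:R) - 1 = a%:R / (n - a%:R) by field; exact: lt0r_neq0.
    by rewrite -/L.
  have a0 : 0 <= (a%:R : R) by [].
  have aa : a%:R * a%:R <= n - a%:R.
    have : a%:R * a%:R <= 5 * L * (5 * L) by apply: ler_pM.
    have : L <= L ^+ 2.
      rewrite expr2; have := ler_wpM2r (ltW (lt_le_trans ltr01 L1)) L1; clear; lra.
    rewrite expr2 in hnL *; clear -hnL ha5 L1; lra.
  have l3 : a%:R * (a%:R / (n - a%:R)) <= 1.
    by rewrite mulrA ler_pdivrMr // mul1r.
  have := ler_wpM2l a0 l1; rewrite /e2; clear -hp1 l3; lra.
have key : V - ((a%:R - rho - 1 - u) * (L - lL) + (lpr - lda)) =
   (V - ((rho - 1) * L + lr - rho + 1 + (- ldm - th * lq))) + (W - rho) + (lr - lL) + 1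
   + s * v + e1 + e2.
  by rewrite /e1 /e2 /v /s Wdef /th /am; ring.
rewrite key; move: hWr; rewrite ler_norml => /andP[w1 w2].
case/andP: hsv => sv1 sv2; case/andP: he1 => e11 e12; case/andP: he2 => e21 e22.
case/andP: hlr => lr1 lr2.
apply/andP; split; clear -VA1 VA2 ln4 w1 w2 sv1 sv2 e11 e12 e21 e22 lr1 lr2; lra.
Qed.
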